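(* For every set of formulas $\Gamma$ and formula $\alpha$: if $\Gamma \vDash_{\bf Km} \alpha$ then there exists a finite subset $\Gamma_0\subseteq\Gamma$ such that $\Gamma_0 \vDash_{\bf Km} \alpha$.
   Context: Formulas are built from a denumerable set of propositional variables by the unary connectives $\neg$, $\Box$ and the binary connective $\to$; $For$ is the set of all formulas. Nmatrix semantics: an Nmatrix has a domain $A$, a set $D\subseteq A$ of designated values and, for each connective, a multioperation assigning to each tuple of arguments a nonempty subset of $A$. A valuation is a map $v:For\to A$ with $v(\neg\alpha)\in\tilde\neg(v(\alpha))$, $v(\Box\alpha)\in\tilde\Box(v(\alpha))$, $v(\alpha\to\beta)\in v(\alpha)\tilde\to v(\beta)$. $\Gamma\vDash\alpha$ iff every valuation $v$ with $v(\gamma)\in D$ for all $\gamma\in\Gamma$ has $v(\alpha)\in D$. The Nmatrix for ${\bf Km}$ (consequence $\vDash_{\bf Km}$): domain $\{T^+,C^+,F^+,I^+,T^-,C^-,F^-,I^-\}$, designated set $+=\{T^+,C^+,F^+,I^+\}$, and $-=\{T^-,C^-,F^-,I^-\}$. Negation: $\tilde\neg T^+=\{F^-\}$, $\tilde\neg C^+=\{C^-\}$, $\tilde\neg F^+=\{T^-\}$, $\tilde\neg I^+=\{I^-\}$, $\tilde\neg T^-=\{F^+\}$, $\tilde\neg C^-=\{C^+\}$, $\tilde\neg F^-=\{T^+\}$, $\tilde\neg I^-=\{I^+\}$. Necessity: $\tilde\Box x=+$ if $x\in\{T^+,T^-,I^+,I^-\}$, and $\tilde\Box x=-$ otherwise.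 Implication (row $x$, column $y$ gives $x\tilde\to y$): $$\begin{array}{c|cccccccc} \to & T^+ & C^+ & F^+ & I^+ & T^- & C^- & F^- & I^-\\\hline T^+ & \{T^+\}&\{C^+\}&\{F^+\}&\{I^+\}&\{T^-\}&\{C^-\}&\{F^-\}&\{I^-\}\\ C^+ & \{T^+\}&\{T^+,C^+\}&\{C^+\}&\{I^+\}&\{T^-\}&\{T^-,C^-\}&\{C^-\}&\{I^-\}\\ F^+ & \{T^+\}&\{T^+\}&\{T^+\}&\{I^+\}&\{T^-\}&\{T^-\}&\{T^-\}&\{I^-\}\\ I^+ & \{I^+\}&\{I^+\}&\{I^+\}&\{I^+\}&\{I^-\}&\{I^-\}&\{I^-\}&\{I^-\}\\ T^- & \{T^+\}&\{C^+\}&\{F^+\}&\{I^+\}&\{T^+\}&\{C^+\}&\{F^+\}&\{I^+\}\\ C^- & \{T^+\}&\{T^+,C^+\}&\{C^+\}&\{I^+\}&\{T^+\}&\{T^+,C^+\}&\{C^+\}&\{I^+\}\\ F^- & \{T^+\}&\{T^+\}&\{T^+\}&\{I^+\}&\{T^+\}&\{T^+\}&\{T^+\}&\{I^+\}\\ I^- & \{I^+\}&\{I^+\}&\{I^+\}&\{I^+\}&\{I^+\}&\{I^+\}&\{I^+\}&\{I^+\}\end{array}$$ *)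

(* Defs.v *)
From Stdlib Require Import List.
Import ListNotations.

Inductive formula : Type :=
| Var : nat -> formula
| Neg : formula -> formula
| Box : formula -> formula
| Imp : formula -> formula -> formula.

Inductive val : Type :=
| Tp | Cp | Fp | Ip | Tm | Cm | Fm | Im.

(* Designated values: + = {T+, C+, F+, I+}. *)
Definition designated (x : val) : Prop :=
  match x with Tp | Cp | Fp | Ip => True | _ => False end.

Definition neg_op (x : val) : list val :=
  match x with
  | Tp => [Fm] | Cp => [Cm] | Fp => [Tm] | Ip => [Im]
  | Tm => [Fp] | Cm => [Cp] | Fm => [Tp] | Im => [Ip]
  end.

Definition plus_set : list val := [Tp; Cp; Fp; Ip].
Definition minus_set : list val := [Tm; Cm; Fm; Im].

Definition box_op (x : val) : list val :=
  match x with
  | Tp | Tm | Ip | Im => plus_set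
  | _ => minus_set
  end.

Definition imp_op (x y : val) : list val :=
  match x with
  | Tp => [y]
  | Cp => match y with
          | Tp => [Tp] | Cp => [Tp; Cp] | Fp => [Cp] | Ip => [Ip]
          | Tm => [Tm] | Cm => [Tm; Cm] | Fm => [Cm] | Im => [Im]
          end
  | Fp => match y with
          | Tp | Cp | Fp => [Tp] | Ip => [Ip]
          | Tm | Cm | Fm => [Tm] | Im => [Im]
          end
  | Ip => match y with
          | Tp | Cp | Fp | Ip => [Ip]
          | _ => [Im]
          end
  | Tm => match y with
          | Tp | Tm => [Tp] | Cp | Cm => [Cp] | Fp | Fm => [Fp] | Ip | Im => [Ip]
          end
  | Cm => match y with
          | Tp | Tm => [Tp] | Cp | Cm => [Tp; Cp] | Fp | Fm => [Cp] | Ip | Im => [Ip]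
          end
  | Fm => match y with
          | Ip | Im => [Ip]
          | _ => [Tp]
          end
  | Im => [Ip]
  end.

Definition valuation (v : formula -> val) : Prop :=
  forall a b : formula,
    In (v (Neg a)) (neg_op (v a)) /\
    In (v (Box a)) (box_op (v a)) /\
    In (v (Imp a b)) (imp_op (v a) (v b)).

Definition Km_conseq (Gamma : formula -> Prop) (alpha : formula) : Prop :=
  forall v : formula -> val, valuation v ->
    (forall g, Gamma g -> designated (v g)) -> designated (v alpha).

(* Main.v *)
Require Import Defs.
From Stdlib Require Import List.
From Stdlib Require Import Arith Lia Classical ClassicalEpsilon Cantor.
Import ListNotations.

Fixpoint enc (f : formula) : nat :=
  match f with
  | Var n => Cantor.to_nat (0, n)
  | Neg a => Cantor.to_nat (1, enc a)
  | Box a => Cantor.to_nat (2, enc a)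
  | Imp a b => Cantor.to_nat (3, Cantor.to_nat (enc a, enc b))
  end.

Lemma to_nat_inj p q : Cantor.to_nat p = Cantor.to_nat q -> p = q.
Proof.
  intro H. rewrite <- (cancel_of_to p), <- (cancel_of_to q), H. reflexivity.
Qed.

Lemma enc_inj : forall f g, enc f = enc g -> f = g.
Proof.
  induction f; destruct g; cbn [enc]; intro H; apply to_nat_inj in H;
    try discriminate.
  - apply (f_equal snd) in H; cbn [snd] in H. subst; reflexivity.
  - apply (f_equal snd) in H; cbn [snd] in H. f_equal; auto.
  - apply (f_equal snd) in H; cbn [snd] in H. f_equal; auto.
  - apply (f_equal snd) in H; cbn [snd] in H. apply to_nat_inj in H.
    pose proof (f_equal fst H) as H1; pose proof (f_equal snd H) as H2.
    cbn [fst snd] in H1, H2. f_equal; auto.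
Qed.

Definition upd (c : nat -> val) (n : nat) (x : val) : nat -> val :=
  fun i => if Nat.eqb i n then x else c i.

Fixpoint build (st : (nat -> val) -> nat -> val) (n : nat) : nat -> val :=
  match n with
  | 0 => fun _ => Tp
  | S m => upd (build st m) m (st (build st m) m)
  end.

Lemma build_agree st : forall n i, i < n -> build st n i = build st (S i) i.
Proof.
  induction n; intros i Hi; [lia|].
  destruct (Nat.eq_dec i n).
  - subst; reflexivity.
  - simpl. unfold upd at 1. rewrite (proj2 (Nat.eqb_neq i n) n0).
    apply IHn; lia.
Qed.

Definition all_vals := [Tp; Cp; Fp; Ip; Tm; Cm; Fm; Im].
Lemma all_vals_in x : In x all_vals.
Proof. destruct x; simpl; tauto. Qed.

Lemma collect (S : formula -> Prop) (Q : val -> list formula -> Prop) :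
  (forall x, exists L, (forall g, In g L -> S g) /\ Q x L) ->
  forall xs, exists L, (forall g, In g L -> S g) /\
    forall x, In x xs -> exists L', Q x L' /\ incl L' L.
Proof.
  intros H xs; induction xs as [|y xs IH].
  - exists []. simpl; split; tauto.
  - destruct IH as [L [HS HL]]. destruct (H y) as [Ly [HSy HLy]].
    exists (Ly ++ L). split.
    + intros g Hg. apply in_app_or in Hg. destruct Hg; auto.
    + intros x [<-|Hx].
      * exists Ly; split; auto. apply incl_appl, incl_refl.
      * destruct (HL x Hx) as [L' [HQ Hi]]. exists L'; split; auto.
        apply incl_appr; auto.
Qed.

Section Main.
Variable Gamma : formula -> Prop.
Variable alpha : formula.

Definition Good (n : nat) (c : nat -> val) : Prop :=
  forall L, (forall g, In g L -> Gamma g) ->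
  exists v, valuation v /\ (forall g, In g L -> designated (v g)) /\
    ~ designated (v alpha) /\ (forall f, enc f < n -> v f = c (enc f)).

Lemma step n c : Good n c -> exists x, Good (S n) (upd c n x).
Proof.
  intro HG. apply NNPP. intro Hno.
  destruct (classic (exists f0, enc f0 = n)) as [[f0 Hf0]|Hnf].
  - assert (Hx : forall x, exists L, (forall g, In g L -> Gamma g) /\
       ~ exists v, valuation v /\ (forall g, In g L -> designated (v g)) /\
         ~ designated (v alpha) /\ (forall f, enc f < S n -> v f = upd c n x (enc f))).
    { intro x. apply NNPP; intro H1. apply Hno. exists x. intros L HL.
      apply NNPP; intro H2. apply H1. exists L; split; auto. }
    destruct (collect _ _ Hx all_vals) as [L [HS HL]].
    destruct (HG L HS) as [v [Hv [HD [Ha Hc]]]].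
    destruct (HL (v f0) (all_vals_in _)) as [L' [HQ Hi]].
    apply HQ. exists v. split; [auto|]. split; [auto|]. split; [auto|].
    intros f Hf. unfold upd. destruct (Nat.eqb_spec (enc f) n).
    + rewrite <- Hf0 in e. apply enc_inj in e. subst. reflexivity.
    + apply Hc. lia.
  - apply Hno. exists Tp. intros L HL.
    destruct (HG L HL) as [v [Hv [HD [Ha Hc]]]].
    exists v. split; [auto|]. split; [auto|]. split; [auto|].
    intros f Hf. unfold upd. destruct (Nat.eqb_spec (enc f) n).
    + exfalso; apply Hnf; eauto.
    + apply Hc. lia.
Qed.

End Main.

Theorem mainTheorem18 :
  forall (Gamma : formula -> Prop) (alpha : formula),
    Km_conseq Gamma alpha ->
    exists Gamma0 : list formula,
      (forall g, In g Gamma0 -> Gamma g) /\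
      Km_conseq (fun g => In g Gamma0) alpha.
Proof.
  intros Gamma alpha HK. apply NNPP. intro Hno.
  assert (G0 : forall c, Good Gamma alpha 0 c).
  { intros c L HL. apply NNPP; intro H1. apply Hno. exists L. split; auto.
    intros v Hv HD. apply NNPP; intro H2. apply H1. exists v.
    split; [auto|]. split; [auto|]. split; [auto|]. intros f Hf; lia. }
  assert (Hst : forall c n, exists x,
     Good Gamma alpha n c -> Good Gamma alpha (S n) (upd c n x)).
  { intros c n. destruct (classic (Good Gamma alpha n c)) as [H|H].
    - destruct (step _ _ _ _ H) as [x Hx]. exists x; auto.
    - exists Tp; tauto. }
  pose (st := fun c n => proj1_sig (constructive_indefinite_description _ (Hst c n))).
  assert (Hst' : forall c n, Good Gamma alpha n c -> Good Gamma alpha (S n) (upd c n (st c n))).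
  { intros c n. unfold st. destruct (constructive_indefinite_description _ (Hst c n)); auto. }
  assert (Gb : forall n, Good Gamma alpha n (build st n)).
  { induction n; [apply G0|]. simpl. apply Hst'; auto. }
  pose (c := fun i => build st (S i) i).
  assert (Gc : forall n, Good Gamma alpha n c).
  { intros n L HL. destruct (Gb n L HL) as [v [Hv [HD [Ha Hc]]]].
    exists v. split; [auto|]. split; [auto|]. split; [auto|].
    intros f Hf. rewrite Hc by auto.
    unfold c. apply build_agree; auto. }
  pose (w := fun f => c (enc f)).
  assert (Hw : valuation w).
  { intros a b.
    destruct (Gc (S (enc a + enc b + enc (Neg a) + enc (Box a) + enc (Imp a b))) [])
      as [v [Hv [_ [_ Hc]]]]; [simpl; tauto|].
    unfold w. rewrite <- !Hc by lia. apply Hv. }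
  destruct (Gc (S (enc alpha)) []) as [v [Hv [_ [Ha Hc]]]]; [simpl; tauto|].
  apply Ha. rewrite Hc by lia. apply (HK w Hw).
  intros g Hg. destruct (Gc (S (enc g)) [g]) as [v' [_ [HD [_ Hc']]]].
  { intros g' [<-|[]]; auto. }
  unfold w. rewrite <- Hc' by lia. apply HD; simpl; auto.
Qed.
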